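(* Let $p$ be an odd prime, $q=p^m$, $q=et+1$ with integers $e\geq 2,t\geq 1$, $R_{e,q}=\mathbb{F}_q[u]/\langle u^e-1\rangle$, and let $\varphi:R_{e,q}^n\to\mathbb{F}_q^{en}$ be the Gray map defined by a matrix $M\in GL_e(\mathbb{F}_q)$ with $MM^T=\gamma I_e$, $\gamma\in\mathbb{F}_q^*$ (see context). A linear code $\mathcal{C}$ of length $n$ over $R_{e,q}$ is an LCD code if and only if $\varphi(\mathcal{C})$ is an LCD code of length $en$ over $\mathbb{F}_q$.
   Context: Write $u^e-1=\prod_{i=1}^e(u-\alpha_i)$ over $\mathbb{F}_q$, $G_i=u-\alpha_i$, $\widehat{G}_i=(u^e-1)/G_i$, $z_iG_i+h_i\widehat{G}_i=1$, $\mu_i=h_i\widehat{G}_i$; these are pairwise orthogonal idempotents summing to $1$, and each $r\in R_{e,q}$ is uniquely $r=\sum_i s_i\mu_i$, $s_i\in\mathbb{F}_q$. The Gray map is $\varphi(r_0,\dots,r_{n-1})=(\boldsymbol{r_0}M,\dots,\boldsymbol{r_{n-1}}M)$ with $\boldsymbol{r_j}=(s_{j,1},\dots,s_{j,e})$ for $r_j=\sum_i s_{j,i}\mu_i$. A code is LCD if $\mathcal{C}\cap\mathcal{C}^\perp=\{0\}$, with Euclidean duals. *)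

(* Defs.v *)
From HB Require Import structures.
From mathcomp Require Import all_boot all_order all_algebra.
Set Implicit Arguments. Unset Strict Implicit. Unset Printing Implicit Defensive.
Import GRing.Theory.
Local Open Scope ring_scope.

(* The ring R_{e,q} = F[u]/<u^e - 1>, u written 'X. *)
Definition Rring (F : finFieldType) (e : nat) := {poly %/ ('X^e - 1 : {poly F})}.

Section Codes.
Variables (K : comNzRingType) (N : nat).
Definition code := 'rV[K]_N -> Prop.
Definition linear_code (C : code) : Prop :=
  C 0 /\ (forall x y, C x -> C y -> C (x + y)) /\ (forall (a : K) x, C x -> C (a *: x)).
(* Euclidean inner product <x,y> = sum_j x_j y_j, as a 1x1 matrix. *)
Definition euclid_dual (C : code) : code :=
  fun y => forall x, C x -> x *m y^T = 0.
Definition LCD (C : code) : Prop :=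
  forall x, (C x /\ euclid_dual C x) <-> x = 0.
End Codes.

Section Gray.
Variables (F : finFieldType) (e : nat).
Local Notation R := (Rring F e).
Definition Gi (alpha : 'I_e -> F) (i : 'I_e) : {poly F} := 'X - (alpha i)%:P.
Definition Ghat (alpha : 'I_e -> F) (i : 'I_e) : {poly F} :=
  ('X^e - 1) %/ Gi alpha i.
Definition mu (alpha : 'I_e -> F) (h : 'I_e -> {poly F}) (i : 'I_e) : R :=
  in_qpoly ('X^e - 1) (h i * Ghat alpha i).
Definition coords (alpha : 'I_e -> F) (h : 'I_e -> {poly F}) (r : R) : 'rV[F]_e :=
  odflt 0 [pick s : 'rV[F]_e | r == \sum_i s 0 i *: mu alpha h i].
Definition gray (n : nat) (alpha : 'I_e -> F) (h : 'I_e -> {poly F})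
    (M : 'M[F]_e) (c : 'rV[R]_n) : 'rV[F]_(n * e) :=
  mxvec (\matrix_(j < n) (coords alpha h (c 0 j) *m M)).
Definition image_code (n : nat) (f : 'rV[R]_n -> 'rV[F]_(n * e))
    (C : code R n) : code F (n * e) :=
  fun y => exists2 x, C x & y = f x.
End Gray.

(* Main.v *)
Require Import Defs.
From HB Require Import structures.
From mathcomp Require Import all_boot all_order all_algebra.
Set Implicit Arguments. Unset Strict Implicit. Unset Printing Implicit Defensive.
Import GRing.Theory.
Import Pdiv.CommonRing Pdiv.RingMonic.
Local Open Scope ring_scope.

Section S.
Variables (F : finFieldType) (e : nat) (he : (1 <= e)%N) (alpha : 'I_e -> F).
Hypothesis halpha : ('X^e - 1 : {poly F}) = \prod_(i < e) ('X - (alpha i)%:P).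
Variables (z h : 'I_e -> {poly F}).
Hypothesis hzh : forall i, z i * Gi alpha i + h i * Ghat alpha i = 1.
Local Notation R := (Rring F e).
Local Notation d := ('X^e - 1 : {poly F}).

Lemma md : d \is monic.
Proof. by rewrite -polyC1 monicXnsubC. Qed.

Lemma size_d : size d = e.+1.
Proof. by rewrite -polyC1 size_XnsubC. Qed.

Lemma mkm : mk_monic d = d.
Proof. by rewrite /mk_monic md size_d ltnS he. Qed.

Lemma root_d i : d.[alpha i] = 0.
Proof.
rewrite halpha horner_prod (bigD1 i) //= !hornerE subrr mul0r //.
Qed.

Lemma ev_rmod p i : (rmodp p d).[alpha i] = p.[alpha i].
Proof.
have md : d \is monic by rewrite -polyC1 monicXnsubC.
rewrite {2}(rdivp_eq md p) hornerD hornerM root_d mulr0 add0r //.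
Qed.

Lemma ev_rmodm p i : (rmodp p (mk_monic d)).[alpha i] = p.[alpha i].
Proof. by rewrite mkm ev_rmod. Qed.

Lemma Ghat_prod i : Ghat alpha i = \prod_(j | j != i) ('X - (alpha j)%:P).
Proof.
by rewrite /Ghat /Gi halpha (bigD1 i) //= mulrC mulpK // polyXsubC_eq0.
Qed.

Lemma Ghat_root i j : j != i -> (Ghat alpha i).[alpha j] = 0.
Proof. by move=> ji; rewrite Ghat_prod (bigD1 j) //= hornerM hornerXsubC subrr mul0r. Qed.

Lemma alpha_inj : injective alpha.
Proof.
move=> i j eq; apply/eqP/negPn/negP => neq.
have := congr1 (fun p => p.[alpha i]) (hzh i).
rewrite hornerD !hornerM eq Ghat_root 1?eq_sym // /Gi hornerXsubC eq subrr hornerC.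
by rewrite !(mulr0, add0r) => /eqP; rewrite eq_sym oner_eq0.
Qed.

Definition ev (r : R) : 'rV[F]_e := \row_k (r : {poly F}).[alpha k].

Lemma evE (r : R) k : ev r 0 k = (r : {poly F}).[alpha k].
Proof. by rewrite mxE. Qed.

Lemma ev_mu i k : ev (mu alpha h i) 0 k = (i == k)%:R.
Proof.
rewrite evE /mu /= ev_rmodm.
have [<-|neq] := eqVneq i k.
  have := congr1 (fun p => p.[alpha i]) (hzh i).
  by rewrite hornerD !hornerM /Gi !hornerE subrr mulr0 add0r.
by rewrite hornerM Ghat_root 1?eq_sym // mulr0.
Qed.

Lemma evM (r s : R) k : ev (r * s) 0 k = ev r 0 k * ev s 0 k.
Proof. by rewrite !evE poly_of_qpolyM ev_rmodm hornerM. Qed.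

Lemma ev_is_linear : linear ev.
Proof. by move=> a r s; apply/rowP => k; rewrite !mxE /= hornerD hornerZ. Qed.

Lemma ev_inj (r : R) : ev r = 0 -> r = 0.
Proof.
move=> H; apply: val_inj => /=.
apply: (@roots_geq_poly_eq0 _ _ [seq alpha k | k <- enum 'I_e]).
- apply/allP => x /mapP [k _ ->]; rewrite /root.
  by have := congr1 (fun v : 'rV_e => v 0 k) H; rewrite evE mxE => ->.
- by rewrite map_inj_uniq ?enum_uniq //; exact: alpha_inj.
- rewrite size_map size_enum_ord.
  have H2 : size (mk_monic d) = e.+1 by rewrite mkm size_d.
  by rewrite -ltnS -H2; exact: size_mk_monic.
Qed.

Lemma evB (r s : R) : ev (r - s) = ev r - ev s.
Proof. by apply/rowP => k; rewrite !mxE /= hornerD hornerN. Qed.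

Lemma ev0 : ev 0 = 0.
Proof. by apply/rowP => k; rewrite !mxE horner0. Qed.

Lemma ev_sum I (r : seq I) (P : pred I) (f : I -> R) k :
  ev (\sum_(i <- r | P i) f i) 0 k = \sum_(i <- r | P i) ev (f i) 0 k.
Proof. by rewrite evE poly_of_qpoly_sum horner_sum; apply: eq_bigr => i _; rewrite evE. Qed.

Lemma ev_sum_mu (s : 'rV[F]_e) : ev (\sum_i s 0 i *: mu alpha h i) = s.
Proof.
apply/rowP => k; rewrite ev_sum (bigD1 k) //= big1 ?addr0.
  by rewrite evE poly_of_qpolyZ hornerZ -evE ev_mu eqxx mulr1.
by move=> i ik; rewrite evE poly_of_qpolyZ hornerZ -evE ev_mu (negbTE ik) mulr0.
Qed.

Lemma coordsE r : coords alpha h r = ev r.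
Proof.
rewrite /coords; case: pickP => [s /eqP -> | H]; first by rewrite ev_sum_mu.
have: r - \sum_i ev r 0 i *: mu alpha h i = 0 by apply: ev_inj; rewrite evB ev_sum_mu subrr.
by move/eqP; rewrite subr_eq0 => E; have := H (ev r); rewrite E.
Qed.

Lemma dot_mxvec n (A B : 'M[F]_(n, e)) :
  (mxvec A *m (mxvec B)^T) 0 0 = \tr (A *m B^T).
Proof.
rewrite !mxE /mxtrace.
rewrite (reindex (uncurry (@mxvec_index n e))) /=; last first.
  exact: curry_mxvec_bij.
symmetry; under eq_bigr do rewrite mxE.
rewrite pair_bigA; apply: eq_bigr => [[j k]] _ /=.
by rewrite !mxE !mxvecE.
Qed.

Definition Ex n (x : 'rV[R]_n) : 'M[F]_(n, e) := \matrix_(j, k) ev (x 0 j) 0 k.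

Lemma grayE n M (x : 'rV[R]_n) : gray alpha h M x = mxvec (Ex x *m M).
Proof.
rewrite /gray; congr mxvec; apply/matrixP => j k; rewrite !mxE coordsE.
by apply: eq_bigr => l _; rewrite !mxE.
Qed.

Lemma ip_ev n (x y : 'rV[R]_n) k :
  ev ((x *m y^T) 0 0) 0 k = \sum_j ev (x 0 j) 0 k * ev (y 0 j) 0 k.
Proof.
have -> : (x *m y^T) 0 0 = \sum_j x 0 j * y 0 j.
  by rewrite mxE; apply: eq_bigr => j _; rewrite mxE.
by rewrite ev_sum; apply: eq_bigr => j _; rewrite evM.
Qed.

Lemma gray_dot n M gamma (hMM : M *m M^T = gamma%:M) (x y : 'rV[R]_n) :
  (gray alpha h M x *m (gray alpha h M y)^T) 0 0
  = gamma * \sum_k ev ((x *m y^T) 0 0) 0 k.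
Proof.
rewrite !grayE dot_mxvec trmx_mul !mulmxA -(mulmxA (Ex x)) hMM mul_mx_scalar.
rewrite -scalemxAl mxtraceZ; congr (_ * _).
rewrite /mxtrace; under [RHS]eq_bigr do rewrite ip_ev.
rewrite exchange_big /=; apply: eq_bigr => j _.
by rewrite mxE; apply: eq_bigr => k _; rewrite !mxE.
Qed.

Lemma mx11_eq0 (K : nzRingType) (A : 'M[K]_1) : A = 0 <-> A 0 0 = 0.
Proof.
split=> [->|H]; first by rewrite mxE.
by apply/matrixP => i j; rewrite !ord1 H mxE.
Qed.

Lemma ip_scale n (a : R) (x y : 'rV[R]_n) : ((a *: x) *m y^T) 0 0 = a * (x *m y^T) 0 0.
Proof. by rewrite -scalemxAl mxE. Qed.

Lemma gray0 n M : gray alpha h M (0 : 'rV[R]_n) = 0.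
Proof.
rewrite grayE (_ : Ex 0 = 0) ?mul0mx.
  by apply/eqP; rewrite mxvec_eq0.
by apply/matrixP => j k; rewrite !mxE horner0.
Qed.

Section Main.
Variables (n : nat) (M : 'M[F]_e) (hM : M \in unitmx) (gamma : F) (hg : gamma != 0).
Hypothesis hMM : M *m M^T = gamma%:M.

Lemma orth (x y : 'rV[R]_n) :
  (forall i, (gray alpha h M (mu alpha h i *: x) *m (gray alpha h M y)^T) 0 0 = 0) ->
  (x *m y^T) 0 0 = 0.
Proof.
move=> H; apply: ev_inj; apply/rowP => i; rewrite [RHS]mxE.
have := H i; rewrite (gray_dot hMM) ip_scale => /eqP; rewrite mulf_eq0 (negbTE hg) /=.
under eq_bigr do rewrite evM ev_mu.
rewrite (bigD1 i) //= eqxx mul1r big1 ?addr0 => [/eqP //| k ki].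
by rewrite eq_sym (negbTE ki) mul0r.
Qed.

Lemma gray_inj (c : 'rV[R]_n) : gray alpha h M c = 0 -> c = 0.
Proof.
rewrite grayE => /eqP; rewrite mxvec_eq0 => /eqP H.
have HE : Ex c = 0 by rewrite -(mulmxK hM (Ex c)) H mul0mx.
apply/rowP => j; rewrite mxE; apply: ev_inj; apply/rowP => k.
by have := congr1 (fun A : 'M_(n, e) => A j k) HE; rewrite !mxE.
Qed.

Lemma main (C : code R n) (hC : linear_code C) :
  LCD C <-> LCD (image_code (@gray F e n alpha h M) C).
Proof.
case: hC => [C0 [CD CZ]].
split=> HL v; split.
- case=> [[c Cc ->] Hd].
  have -> : c = 0; last exact: gray0.
  apply/(HL c); split => // x Cx; apply/mx11_eq0; apply: orth => i.
  by apply/mx11_eq0; apply: Hd; exists (mu alpha h i *: x) => //; apply: CZ.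
- move=> ->; split; first by exists 0 => //; rewrite gray0.
  by move=> x _; rewrite trmx0 mulmx0.
- case=> [Cv Dv]; apply: gray_inj; apply/(HL (gray alpha h M v)); split.
    by exists v.
  move=> w [x Cx ->]; apply/mx11_eq0; rewrite (gray_dot hMM).
  have /mx11_eq0 -> := Dv x Cx.
  by rewrite ev0 big1 ?mulr0 // => k _; rewrite mxE.
- move=> ->; split => // x _; by rewrite trmx0 mulmx0.
Qed.
End Main.
End S.

Unset Implicit Arguments.

Theorem theorem4p8
  (F : finFieldType) (p m e t n : nat)
  (hp : prime p) (hpodd : odd p) (hq : #|F| = (p ^ m)%N)
  (he : (2 <= e)%N) (ht : (1 <= t)%N) (hqet : #|F| = (e * t).+1)
  (alpha : 'I_e -> F)
  (halpha : ('X^e - 1 : {poly F}) = \prod_(i < e) ('X - (alpha i)%:P))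
  (z h : 'I_e -> {poly F})
  (hzh : forall i, z i * Gi alpha i + h i * Ghat alpha i = 1)
  (M : 'M[F]_e) (hM : M \in unitmx) (gamma : F) (hgamma : gamma != 0)
  (hMM : M *m M^T = gamma%:M)
  (C : code (Rring F e) n) (hC : linear_code C) :
  LCD C <-> LCD (image_code (@gray F e n alpha h M) C).
Proof.
exact: (main (ltnW he) halpha hzh hM hgamma hMM hC).
Qed.
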